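(* Let $k\ge 2$ and $\Delta\ge 2^{4^k+1}$ be integers, let $Q=\{Q_1,\dots,Q_\Delta\}$ be an arbitrary multiset in $h_1(\Delta)$, and let $P_\infty$ be the element of $Q$ described in the context. Let $\alpha:\{1,\dots,\Delta\}\to\{\mathrm{out},\mathrm{in}\}$ be any function. Let $\mathcal I\subseteq\{1,\dots,\Delta\}$ be the set of indices $i$ with $\{Q_i,P_\infty\}\notin g_1(\Delta)$ and $11\dots1\notin Q_i$. For $\mathcal J\subseteq\mathcal I$, let $N(\mathcal J)\subseteq\{1,\dots,\Delta\}$ be the set of indices $i$ for which there is $j\in\mathcal J$ with $\{Q_i,Q_j\}\in g_1(\Delta)$ and $\alpha(i)\ne\alpha(j)$. Then there is $\mathcal J^*\subseteq\mathcal I$ with $|\mathcal J^*|>|N(\mathcal J^* )|$ such that $\alpha(j)\neq\alpha(i)$ for all $j\in\mathcal J^*$, $i\in N(\mathcal J^* )$.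
   Context: A trit sequence of length $k$ is a word $a_1\dots a_k$ with $a_j\in\{0,1,2\}$; it ''has an $i$ at position $j$'' if $a_j=i$; tritwise addition adds entries position by position. $g_1(\Delta)$ is the set of all 2-element multisets $\{W,X\}$ of sets of trit sequences of length $k$ such that there exist $w\in W$, $x\in X$ whose tritwise sum is $22\dots2$. $h_1(\Delta)$ is the set of all multisets $\{W_1,\dots,W_\Delta\}$ of sets of trit sequences of length $k$ such that (A) for any $w_1\in W_1,\dots,w_\Delta\in W_\Delta$ there is an index $1\le j\le k$ such that the number of $w_i$ with a $2$ at position $j$ is strictly greater than the number of $w_i$ with a $0$ at position $j$, and at most $k$ of the $w_i$ have a $0$ at position $j$; and (B) adding any trit sequence of length $k$ to any single $W_i$ yields a multiset violating (A). For $Q\in h_1(\Delta)$ with $\Delta\ge 2^{4^k+1}$, $P_\infty$ denotes the unique element of $Q$ that has multiplicity at least $\Delta-2^{4^k}$ in $Q$ and contains $11\dots1$ (such an element exists and is unique). *)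

(* Defs.v *)
From mathcomp Require Import all_boot.
Set Implicit Arguments. Unset Strict Implicit. Unset Printing Implicit Defensive.

Definition trit (k : nat) := {ffun 'I_k -> 'I_3}.

Definition const_trit (k : nat) (c : 'I_3) : trit k := [ffun _ => c].
Definition all1 (k : nat) : trit k := const_trit k (inord 1).

Definition sums_to_2 (k : nat) (w x : trit k) : bool :=
  [forall j : 'I_k, (val (w j) + val (x j) == 2)%N].

Definition g1 (k : nat) (W X : {set trit k}) : bool :=
  [exists w in W, exists x in X, sums_to_2 w x].

(* A multiset {W_1,...,W_Delta} is represented by an indexed family
   W : 'I_Delta -> {set trit k}. *)

Definition condA (k Delta : nat) (W : 'I_Delta -> {set trit k}) : Prop :=
  forall w : 'I_Delta -> trit k, (forall i, w i \in W i) ->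
    exists j : 'I_k,
      (#|[set i | val (w i j) == 2%N]| > #|[set i | val (w i j) == 0%N]|)%N /\
      (#|[set i | val (w i j) == 0%N]| <= k)%N.

Definition h1 (k Delta : nat) (W : 'I_Delta -> {set trit k}) : Prop :=
  condA W /\
  forall (i : 'I_Delta) (x : trit k), x \notin W i ->
    ~ condA (fun i' => if i' == i then x |: W i else W i').

(* Main.v *)
Require Import Defs.
From mathcomp Require Import all_boot zify.
From Stdlib Require Import Classical.
Set Implicit Arguments. Unset Strict Implicit. Unset Printing Implicit Defensive.

Lemma sums_to_2C k (a b : trit k) : sums_to_2 a b = sums_to_2 b a.
Proof. by apply: eq_forallb => j; rewrite addnC. Qed.

Lemma g1C k (W X : {set trit k}) : g1 W X = g1 X W.
Proof.
by apply/idP/idP => /existsP [a /andP [ha /existsP [b /andP [hb hs]]]];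
  apply/existsP; exists b; rewrite hb /=; apply/existsP; exists a;
  rewrite ha sums_to_2C.
Qed.

Definition NN (T U : finType) (r : T -> U -> bool) (J : {set T}) : {set U} :=
  [set y | [exists x in J, r x y]].

Lemma inNN (T U : finType) (r : T -> U -> bool) J y :
  (y \in NN r J) = [exists x in J, r x y].
Proof. by rewrite inE. Qed.

Lemma hall (T U : finType) (u0 : U) n : forall (r : T -> U -> bool) (A : {set T}),
  (#|A| <= n)%N -> (forall J : {set T}, J \subset A -> (#|J| <= #|NN r J|)%N) ->
  exists f : T -> U, (forall x, x \in A -> r x (f x)) /\ {in A &, injective f}.
Proof.
elim: n => [|n IH] r A hA hH.
  have -> : A = set0 by apply/eqP; rewrite -cards_eq0 -leqn0.
  by exists (fun _ => u0); split => [x|x y]; rewrite in_set0.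
case: (eqVneq A set0) => [->|An0].
  by exists (fun _ => u0); split => [x|x y]; rewrite in_set0.
case: (boolP [exists J : {set T}, [&& J \subset A, J != set0, J != A & #|NN r J| <= #|J|]])
  => [/existsP [J /and4P [sJA J0 JA hJ]] | hno].
- have ltJ : #|J| < #|A| by apply: proper_card; rewrite properEneq JA sJA.
  have [f1 [f1r f1i]] := IH r J (ltac:(lia)) (fun K sK => hH K (subset_trans sK sJA)).
  pose r2 := fun x y => r x y && (y \notin NN r J).
  have cA2 : #|A :\: J| <= n.
    rewrite cardsD (setIidPr sJA); move: J0; rewrite -card_gt0; lia.
  have hH2 : forall K : {set T}, K \subset A :\: J -> #|K| <= #|NN r2 K|.
    move=> K sK.
    have e2 : NN r2 K = NN r K :\: NN r J.
      apply/setP => y; rewrite in_setD [y \in NN r2 K]inNN [y \in NN r K]inNN /r2.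
      case: (boolP (y \in NN r J)) => hy /=.
        by apply/negbTE/existsPn => x; rewrite !andbF.
      by apply: eq_existsb => x; rewrite andbT.
    have e1 : NN r (K :|: J) = NN r K :|: NN r J.
      apply/setP => y; rewrite in_setU !inNN.
      apply/existsP/orP => [[x /andP [xKJ rxy]] | [/existsP [x /andP [xK rxy]] | /existsP [x /andP [xJ rxy]]]].
      + move: xKJ; rewrite in_setU => /orP [xK|xJ]; [left|right]; apply/existsP; exists x;
          by rewrite ?xK ?xJ rxy.
      + by exists x; rewrite in_setU xK rxy.
      + by exists x; rewrite in_setU xJ orbT rxy.
    have KJ0 : K :&: J = set0.
      apply/setP => x; rewrite !inE; case xK: (x \in K) => //=.
      by move: (subsetP sK x xK); rewrite inE => /andP [xnJ _]; rewrite (negbTE xnJ).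
    have := hH (K :|: J) (ltac:(by rewrite subUset sJA (subset_trans sK (subsetDl A J)))).
    rewrite e1 e2 cardsU (cardsU (NN r K)) cardsD KJ0 cards0.
    have := subset_leq_card (subsetIl (NN r K) (NN r J)).
    lia.
  have [f2 [f2r f2i]] := IH r2 (A :\: J) cA2 hH2.
  exists (fun x => if x \in J then f1 x else f2 x); split.
  + move=> x xA; case: ifP => xJ; first exact: f1r.
    have : x \in A :\: J by rewrite in_setD xJ xA.
    by move/f2r => /andP [].
  + have inJ : forall x, x \in J -> f1 x \in NN r J.
      by move=> x xJ; rewrite inNN; apply/existsP; exists x; rewrite xJ f1r.
    have outJ : forall x, x \in A -> x \notin J -> f2 x \notin NN r J.
      by move=> x xA xJ; have /f2r /andP [] : x \in A :\: J by rewrite in_setD xJ xA.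
    move=> x y xA yA /=; case xJ: (x \in J); case yJ: (y \in J) => e.
    * exact: f1i.
    * by have := outJ y yA (negbT yJ); rewrite -e inJ.
    * by have := outJ x xA (negbT xJ); rewrite e inJ.
    * by apply: f2i => //; rewrite in_setD ?xJ ?yJ ?xA ?yA.
- move/existsPn: hno => hno.
  have [a aA] : exists a, a \in A by apply/set0Pn.
  have : 0 < #|NN r [set a]|.
    by have := hH [set a]; rewrite sub1set aA cards1; apply.
  rewrite card_gt0 => /set0Pn [b]; rewrite inNN => /existsP [a' /andP []].
  rewrite in_set1 => /eqP -> rab.
  pose r2 := fun x y => r x y && (y != b).
  have cA2 : #|A :\ a| <= n by have := cardsD1 a A; rewrite aA; lia.
  have hH2 : forall K : {set T}, K \subset A :\ a -> #|K| <= #|NN r2 K|.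
    move=> K sK. case: (eqVneq K set0) => [->|K0]; first by rewrite cards0.
    have KA : K \subset A := subset_trans sK (subD1set A a).
    have aK : a \notin K by apply/negP => /(subsetP sK); rewrite !inE eqxx.
    have KnA : K != A by apply/eqP => e; move: aK; rewrite e aA.
    have := hno K; rewrite KA K0 KnA /= -ltnNge => lt.
    have e2 : NN r2 K = NN r K :\ b.
      apply/setP => y; rewrite in_setD1 !inNN /r2.
      case: (eqVneq y b) => [->|yb] /=.
        by apply/negbTE/existsPn => x; rewrite ?eqxx ?andbF.
      by apply: eq_existsb => x; rewrite andbT.
    rewrite e2; have := cardsD1 b (NN r K); case: (b \in _) => /=; lia.
  have [f2 [f2r f2i]] := IH r2 (A :\ a) cA2 hH2.
  exists (fun x => if x == a then b else f2 x); split.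
  + move=> x xA; case: eqP => [->|xa]; first exact: rab.
    have : x \in A :\ a by rewrite in_setD1 xA andbT; apply/eqP.
    by move/f2r => /andP [].
  + have nb : forall x, x \in A -> x != a -> f2 x != b.
      by move=> x xA xa; have /f2r /andP [] : x \in A :\ a by rewrite in_setD1 xA xa.
    move=> x y xA yA /=; case: (eqVneq x a) => [->|xa]; case: (eqVneq y a) => [->|ya] // e.
    * by have := nb y yA ya; rewrite -e eqxx.
    * by have := nb x xA xa; rewrite e eqxx.
    * by apply: f2i => //; rewrite in_setD1 ?xa ?ya.
Qed.

Lemma pairing (T : finType) (adj : rel T) (s : T -> bool)
  (adjC : forall x y, adj x y = adj y x) n :
  forall (I : {set T}) (F : T -> T), (#|I| <= n)%N ->
  {in I &, injective F} ->
  (forall v, v \in I -> adj v (F v) && (s (F v) != s v)) ->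
  exists sg : T -> T, [/\ involutive sg,
     (forall v, v \in I -> sg v != v),
     (forall v, sg v != v -> adj v (sg v))
   & (forall v, v \notin I -> v \notin F @: I -> sg v = v)].
Proof.
elim: n => [|n IH] I F hI Finj hF.
  have -> : I = set0 by apply/eqP; rewrite -cards_eq0 -leqn0.
  exists id; split; [by [] | by move=> v; rewrite in_set0 | by move=> v; rewrite eqxx | by []].
case: (boolP [exists v in I, v \notin F @: I]) => [/existsP [v /andP [vI vF]] | hall].
- set u := F v.
  have /andP [adjvu suv] := hF v vI.
  have uv : u != v by apply/eqP => e; move: suv; rewrite -/u e eqxx.
  have vu : v != u by rewrite eq_sym.
  pose I' := I :\ v :\ u.
  have sI' : I' \subset I by apply/subsetP => x; rewrite !in_setD1 => /and3P [_ _ ->].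
  have cI' : (#|I'| <= n)%N.
    have := cardsD1 v I; rewrite vI.
    have := subset_leq_card (subD1set (I :\ v) u); rewrite -/I'. lia.
  have [sg' [inv' mov' adj' fix']] :=
    IH I' F cI' (sub_in2 (subsetP sI') Finj) (fun w hw => hF w (subsetP sI' w hw)).
  have vI' : v \notin I' by rewrite !in_setD1 eqxx andbF.
  have uI' : u \notin I' by rewrite !in_setD1 eqxx.
  have vFI' : v \notin F @: I' by apply: contra vF; apply: subsetP; exact: imsetS sI'.
  have uFI' : u \notin F @: I'.
    apply/imsetP => -[y yI' e]; have yI := subsetP sI' y yI'.
    have ev := Finj _ _ vI yI e. by move: yI'; rewrite -ev (negbTE vI').
  have sv := fix' v vI' vFI'; have su := fix' u uI' uFI'.
  exists (fun x => if x == v then u else if x == u then v else sg' x).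
  split.
  + move=> x.
    case: (eqVneq x v) => [->|xv]; first by rewrite !eqxx ?(negbTE uv) ?eqxx.
    case: (eqVneq x u) => [->|xu]; first by rewrite !eqxx ?(negbTE uv).
    have h1 : sg' x != v by apply/eqP => e; move: xv; rewrite -(inv' x) e sv eqxx.
    have h2 : sg' x != u by apply/eqP => e; move: xu; rewrite -(inv' x) e su eqxx.
    by rewrite (negbTE h1) (negbTE h2) inv'.
  + move=> x xI.
    case: (eqVneq x v) => [->|xv]; first by [].
    case: (eqVneq x u) => [->|xu]; first exact: vu.
    by apply: (mov' x); rewrite !in_setD1 xu xv xI.
  + move=> x.
    case: (eqVneq x v) => [->|xv]; first by [].
    case: (eqVneq x u) => [->|xu]; first by rewrite adjC.
    exact: adj'.
  + move=> x xI xF.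
    have xv : x != v by apply/eqP => e; move: xI; rewrite e vI.
    have xu : x != u by apply/eqP => e; move: xF; rewrite e imset_f.
    rewrite (negbTE xv) (negbTE xu); apply: fix'.
      by apply: contra xI; apply: (subsetP sI').
    by apply: contra xF; apply: subsetP; exact: imsetS sI'.
- move/existsPn: hall => hall.
  have sIF : I \subset F @: I.
    by apply/subsetP => x xI; have := hall x; rewrite xI /= negbK.
  have eFI : F @: I = I.
    by apply/eqP; rewrite eq_sym eqEcard sIF leq_imset_card.
  have FI : forall x, x \in I -> F x \in I by move=> x xI; rewrite -eFI imset_f.
  pose g x := odflt x [pick y in I | F y == x].
  have gP : forall x, x \in I -> g x \in I /\ F (g x) = x.
    move=> x xI; rewrite /g; case: pickP => [y /andP [yI /eqP e] | none] //=.
    exfalso; move: xI; rewrite -eFI => /imsetP [y yI e].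
    by have := none y; rewrite yI e eqxx.
  have sF : forall x, x \in I -> s (F x) = ~~ s x.
    by move=> x /hF /andP [_]; case: (s x); case: (s (F x)).
  have Fneq : forall x, x \in I -> F x != x.
    by move=> x xI; apply/eqP => e; have := sF x xI; rewrite e; case: (s x).
  exists (fun x => if x \in I then (if s x then F x else g x) else x).
  split.
  + move=> x; case xI: (x \in I); last by rewrite xI.
    case sx: (s x).
      rewrite (FI x xI) (sF x xI) sx /=.
      by have [gI gF] := gP (F x) (FI x xI); apply: Finj.
    have [gI gF] := gP x xI.
    have sg : s (g x) = true by have := sF (g x) gI; rewrite gF sx; case: (s (g x)).
    by rewrite gI sg.
  + move=> x xI; rewrite xI; case: (s x); first exact: Fneq.
    have [gI gF] := gP x xI.
    by apply/eqP => e; have := Fneq x xI; rewrite -{1}e gF eqxx.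
  + move=> x; case xI: (x \in I); last by rewrite eqxx.
    case: (s x) => _; first by have /andP [] := hF x xI.
    have [gI gF] := gP x xI.
    by rewrite adjC; have /andP [] := hF (g x) gI; rewrite gF.
  + by move=> x xI _; rewrite (negbTE xI).
Qed.

Lemma no_cancel (k Delta : nat) (Q : 'I_Delta -> {set trit k}) (rho : 'I_Delta -> 'I_Delta) :
  condA Q -> involutive rho -> (forall x, rho x != x -> g1 (Q x) (Q (rho x))) ->
  (forall x, rho x == x -> all1 k \in Q x) -> False.
Proof.
move=> hA inv hadj hfix.
pose P x y := [pick p : trit k * trit k | (p.1 \in Q x) && (p.2 \in Q y) && sums_to_2 p.1 p.2].
have PP : forall x, rho x != x -> exists p, P x (rho x) = Some p /\
    [&& p.1 \in Q x, p.2 \in Q (rho x) & sums_to_2 p.1 p.2].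
  move=> x hx; rewrite /P; case: pickP => [p hp | none].
    by exists p; split => //; move: hp => /andP [/andP [-> ->] ->].
  exfalso; move: (hadj x hx) => /existsP [a /andP [ha /existsP [b /andP [hb hs]]]].
  by have := none (a, b); rewrite /= ha hb hs.
pose w x := if rho x == x then all1 k
  else if (x < rho x)%N then (if P x (rho x) is Some p then p.1 else all1 k)
  else (if P (rho x) x is Some p then p.2 else all1 k).
have wx1 : forall x, rho x != x -> (x < rho x)%N -> exists p : trit k * trit k,
    [/\ [&& p.1 \in Q x, p.2 \in Q (rho x) & sums_to_2 p.1 p.2], w x = p.1 & w (rho x) = p.2].
  move=> x hx lt.
  have hx' : rho (rho x) != rho x by rewrite inv eq_sym.
  have [p [Pe hp]] := PP x hx.
  exists p; split => //.
    by rewrite /w (negbTE hx) lt Pe.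
  have lt' : (rho x < rho (rho x))%N = false by rewrite inv; apply/negbTE; rewrite -leqNgt ltnW.
  by rewrite /w (negbTE hx') lt' inv Pe.
have wQ : forall x, w x \in Q x.
  move=> x; case: (eqVneq (rho x) x) => [e|hx].
    by rewrite /w e eqxx; apply: hfix; rewrite e.
  case: (ltnP x (rho x)) => lt.
    by have [p [/and3P [h1 _ _] -> _]] := wx1 x hx lt.
  have hy : rho (rho x) != rho x by rewrite inv eq_sym.
  have lt2 : (rho x < rho (rho x))%N by rewrite inv ltn_neqAle lt andbT; exact: hx.
  have [p [/and3P [_ h2 _] _ e2]] := wx1 (rho x) hy lt2.
  by move: h2 e2; rewrite inv => h2 ->.
have wS : forall x, rho x != x -> sums_to_2 (w x) (w (rho x)).
  move=> x hx.
  case: (ltnP x (rho x)) => lt.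
    by have [p [/and3P [_ _ h3] -> ->]] := wx1 x hx lt.
  have hy : rho (rho x) != rho x by rewrite inv eq_sym.
  have lt2 : (rho x < rho (rho x))%N by rewrite inv ltn_neqAle lt andbT; exact: hx.
  have [p [/and3P [_ _ h3] e1 e2]] := wx1 (rho x) hy lt2.
  by move: e2; rewrite inv => ->; rewrite e1 sums_to_2C.
have [j [hlt _]] := hA w wQ.
set S2 := [set i | val (w i j) == 2%N] in hlt.
set S0 := [set i | val (w i j) == 0%N] in hlt.
have sub : rho @: S2 \subset S0.
  apply/subsetP => y /imsetP [i]; rewrite inE => /eqP h2 ->.
  case: (eqVneq (rho i) i) => [e|hx].
    move: h2; rewrite /w e eqxx /all1 /const_trit ffunE; change (nat_of_ord (inord 1 : 'I_3) = 2 -> i \in S0); by rewrite inordK.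
  have := wS i hx => /forallP /(_ j) /eqP; rewrite h2 inE => h.
  apply/eqP; lia.
have := subset_leq_card sub; rewrite card_imset; last exact: can_inj inv.
lia.
Qed.

Theorem lemma6 (k Delta : nat) (Q : 'I_Delta -> {set trit k})
  (Pinf : {set trit k}) (alpha : 'I_Delta -> bool) :
  (2 <= k)%N ->
  (2 ^ (4 ^ k + 1) <= Delta)%N ->
  h1 Q ->
  (* Pinf is an element of Q of multiplicity >= Delta - 2^(4^k) containing 11..1 *)
  (Delta - 2 ^ (4 ^ k) <= #|[set i | Q i == Pinf]|)%N ->
  all1 k \in Pinf ->
  let I := [set i | ~~ g1 (Q i) Pinf & all1 k \notin Q i] in
  let N := fun J : {set 'I_Delta} =>
    [set i | [exists j in J, g1 (Q i) (Q j) && (alpha i != alpha j)]] in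
  exists2 J : {set 'I_Delta}, J \subset I &
    (#|N J| < #|J|)%N /\
    (forall j i, j \in J -> i \in N J -> alpha j != alpha i).
Proof.
move=> hk hD [hA _] hB hP I N.
have D0 : (0 < Delta)%N by apply: leq_trans hD; rewrite expn_gt0.
pose x0 := Ordinal D0.
pose r := fun j i : 'I_Delta => g1 (Q i) (Q j) && (alpha i != alpha j).
pose Ia a := [set j in I | alpha j == a].
have key : forall a, (exists J : {set 'I_Delta}, J \subset Ia a /\ (#|N J| < #|J|)%N) \/
   exists f : 'I_Delta -> 'I_Delta, (forall x, x \in Ia a -> r x (f x)) /\ {in Ia a &, injective f}.
  move=> a; case: (classic (exists J : {set 'I_Delta}, J \subset Ia a /\ (#|N J| < #|J|)%N)) => h; [by left | right].
  apply: (@hall 'I_Delta 'I_Delta x0 #|Ia a| r (Ia a)) => // J sJ.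
  rewrite leqNgt; apply/negP => hlt; apply: h; exists J; split => //.
have wit : forall a (J : {set 'I_Delta}), J \subset Ia a -> (#|N J| < #|J|)%N ->
    exists2 J : {set 'I_Delta}, J \subset I &
    (#|N J| < #|J|)%N /\ (forall j i, j \in J -> i \in N J -> alpha j != alpha i).
  move=> a J sJ hlt; exists J.
    by apply: subset_trans sJ _; apply/subsetP => x; rewrite inE => /andP [].
  split => // j i jJ; rewrite inE => /existsP [j' /andP [j'J /andP [_ hne]]].
  have := subsetP sJ j jJ; rewrite inE => /andP [_ /eqP ej].
  have := subsetP sJ j' j'J; rewrite inE => /andP [_ /eqP ej'].
  by rewrite ej -ej' eq_sym.
case: (key true) => [[J [sJ hlt]]|[ft [ftr fti]]]; first exact: wit sJ hlt.
case: (key false) => [[J [sJ hlt]]|[ff [ffr ffi]]]; first exact: wit sJ hlt.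
exfalso.
pose F j := if alpha j then ft j else ff j.
have FP : forall j, j \in I -> g1 (Q j) (Q (F j)) && (alpha (F j) != alpha j).
  move=> j jI; rewrite /F; case aj: (alpha j).
    have jIa : j \in Ia true by rewrite inE jI aj.
    have /andP [h1 h2] := ftr j jIa; by rewrite g1C h1 /= -aj.
  have jIa : j \in Ia false by rewrite inE jI aj.
  have /andP [h1 h2] := ffr j jIa; by rewrite g1C h1 /= -aj.
have Finj : {in I &, injective F}.
  move=> x y xI yI; have := FP x xI; have := FP y yI.
  rewrite /F; case ax: (alpha x); case ay: (alpha y) => /andP [_ h1] /andP [_ h2] e.
  - by apply: fti => //; rewrite /Ia inE ?xI ?yI ?ax ?ay.
  - by move: h1 h2; rewrite e; case: (alpha (ff y)).
  - by move: h1 h2; rewrite e; case: (alpha (ft y)).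
  - by apply: ffi => //; rewrite /Ia inE ?xI ?yI ?ax ?ay.
have [sg [sginv sgmov sgadj sgfix]] :=
  @pairing _ (fun x y => g1 (Q x) (Q y)) alpha (fun x y => g1C _ _) #|I| I F (leqnn _) Finj FP.
pose B := [set i | Q i == Pinf].
have notIB : forall i, i \in B -> i \notin I.
  by move=> i; rewrite !inE => /eqP ->; rewrite hP andbF.
have fB : forall i, i \in B -> sg i = i.
  move=> i iB; apply: sgfix; first exact: notIB.
  apply/imsetP => -[j jI e]; have := FP j jI; rewrite -e.
  move: iB; rewrite inE => /eqP ->=> /andP [hg _].
  by move: jI; rewrite inE hg.
pose I2 := [set v | (all1 k \notin Q v) && (sg v == v)].
have I2g : forall v, v \in I2 -> g1 (Q v) Pinf /\ v \notin B.
  move=> v; rewrite inE => /andP [h1 /eqP h2]; split.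
    have vI : v \notin I by apply/negP => vI; move: (sgmov v vI); rewrite h2 eqxx.
    by move: vI; rewrite inE h1 andbT negbK.
  by rewrite inE; apply/negP => /eqP e; move: h1; rewrite e hP.
have cB : (#|I2| <= #|B|)%N.
  have : I2 \subset ~: B by apply/subsetP => v /I2g [_ hv]; rewrite inE hv.
  move/subset_leq_card; have := cardsC B; rewrite card_ord.
  move: hB hD; rewrite -/B expnD expn1; set X := 2 ^ (4 ^ k); lia.
have hH : forall J : {set 'I_Delta}, J \subset I2 ->
    (#|J| <= #|NN (fun _ u => u \in B) J|)%N.
  move=> J sJ; case: (eqVneq J set0) => [->|J0]; first by rewrite cards0.
  have [x xJ] := set0Pn _ J0.
  have : B \subset NN (fun _ u => u \in B) J.
    by apply/subsetP => u uB; rewrite inNN; apply/existsP; exists x; rewrite xJ uB.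
  move/subset_leq_card => h2; apply: leq_trans (subset_leq_card sJ) _; exact: leq_trans cB h2.
have [h [hr hi]] := @hall 'I_Delta 'I_Delta x0 #|I2| (fun _ u => u \in B) I2 (leqnn _) hH.
have hP2 : forall v, v \in I2 -> g1 (Q v) (Q (h v)) && ((h v \in B) != (v \in B)).
  move=> v vI; have [g nB] := I2g v vI; have hB' := hr v vI.
  have e : Q (h v) = Pinf by apply/eqP; move: (hB'); rewrite inE.
  by rewrite e g hB' (negbTE nB).
have [tau [tinv tmov tadj tfix]] :=
  @pairing _ (fun x y => g1 (Q x) (Q y)) (fun x => x \in B) (fun x y => g1C _ _) #|I2| I2 h (leqnn _) hi hP2.
have mv : forall y, tau y != y -> (y \in I2) || (y \in h @: I2).
  move=> y; apply: contraR; rewrite negb_or => /andP [a b]; by rewrite tfix // eqxx.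
pose rho x := if sg x != x then sg x else tau x.
apply: (@no_cancel k Delta Q rho hA).
- move=> x; rewrite /rho; case: (eqVneq (sg x) x) => [e|ne] /=.
    case: (eqVneq (tau x) x) => [te|tne].
      by rewrite te e eqxx /= te.
    have := mv (tau x) (ltac:(by rewrite tinv eq_sym)); case/orP => [yI2 | /imsetP [z zI2 ez]].
      by have := yI2; rewrite inE => /andP [_ /eqP ->]; rewrite eqxx /= tinv.
    by rewrite ez (fB _ (hr z zI2)) eqxx /= -ez tinv.
  by rewrite sginv eq_sym ne.
- move=> x; rewrite /rho; case: (eqVneq (sg x) x) => [e|ne] /=.
    by move=> tn; exact: tadj x tn.
  by move=> _; exact: sgadj x ne.
- move=> x; rewrite /rho; case: (eqVneq (sg x) x) => [e|ne] /=; last first.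
    by move/eqP => e; move: ne; rewrite e eqxx.
  move=> te; case: (boolP (all1 k \in Q x)) => // hn.
  have : x \in I2 by rewrite inE hn e eqxx.
  by move/tmov; rewrite te.
Qed.
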